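(* For every $\rho>-1$, the function $C\mapsto F^{\rm bsc}(\rho;C)$ is concave on $[0,1]$. It is non-decreasing in $C$ for $-1<\rho\le0$ and non-increasing in $C$ for $\rho\ge0$.
   Context: Logarithms are base 2. Let $h(p)=-p\log p-(1-p)\log(1-p)$ be the binary entropy function and let $h^{-1}$ be its inverse on $[0,\tfrac12]$. For $C\in[0,1]$ and $\rho>-1$ define $$F^{\rm bsc}(\rho;C)=2^{-\rho}\Bigl(\varepsilon^{1/(1+\rho)}+(1-\varepsilon)^{1/(1+\rho)}\Bigr)^{1+\rho},\qquad \varepsilon=h^{-1}(1-C).$$ *)

(* Defs.v *)
From Stdlib Require Import Reals Lra ClassicalEpsilon.
Open Scope R_scope.

Definition log2 (x : R) : R := ln x / ln 2.

Definition xlog2x (x : R) : R := if Req_EM_T x 0 then 0 else x * log2 x.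

Definition h (p : R) : R := - xlog2x p - xlog2x (1 - p).

(* inverse of h on [0,1/2]: the p in [0,1/2] with h p = y (unique for y in [0,1]) *)
Definition hinv (y : R) : R :=
  epsilon (inhabits 0) (fun p => 0 <= p <= 1/2 /\ h p = y).

(* real power with 0^a = 0 (used only with a > 0) *)
Definition rpow (x a : R) : R := if Req_EM_T x 0 then 0 else Rpower x a.

Definition Fbsc (rho C : R) : R :=
  let eps := hinv (1 - C) in
  rpow 2 (- rho) *
  rpow (rpow eps (1 / (1 + rho)) + rpow (1 - eps) (1 / (1 + rho))) (1 + rho).

Definition concave_on_01 (f : R -> R) : Prop :=
  forall x y t, 0 <= x <= 1 -> 0 <= y <= 1 -> 0 <= t <= 1 ->
    t * f x + (1 - t) * f y <= f (t * x + (1 - t) * y).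

(* Main.v *)
Require Import Defs.
From Stdlib Require Import Reals Lra ClassicalEpsilon.
From Coquelicot Require Import Coquelicot.
Open Scope R_scope.

Lemma mono_deriv (f df : R -> R) (a b : R) : a <= b ->
  (forall x, a <= x <= b -> is_derive f x (df x)) ->
  (forall x, a <= x <= b -> 0 <= df x) -> f a <= f b.
Proof.
  intros Hab Hd Hp. destruct (Req_dec a b) as [->|Hne]; [lra|].
  destruct (MVT_cor2 f df a b) as [c [Hc1 Hc2]]; [lra| |].
  - intros c Hc. apply is_derive_Reals. apply Hd. exact Hc.
  - assert (0 <= df c) by (apply Hp; lra). nra.
Qed.

Lemma L1 x : 0 <= x * exp x - exp x + 1.
Proof.
  pose proof (exp_ineq1_le (-x)). pose proof (exp_pos x).
  assert (exp x * exp (-x) = 1) by (rewrite <- exp_plus; replace (x + - x) with 0 by ring; apply exp_0).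
  nra.
Qed.

Lemma L2 x : 0 <= x -> 0 <= x * exp x - 2 * exp x + 2 + x.
Proof.
  intros Hx.
  assert (H := mono_deriv (fun x => x * exp x - 2 * exp x + 2 + x)
     (fun x => x * exp x - exp x + 1) 0 x Hx).
  simpl in H. rewrite exp_0 in H.
  assert (0 * 1 - 2 * 1 + 2 + 0 = 0) as E by ring. rewrite E in H. apply H.
  - intros y _. auto_derive; auto. ring.
  - intros y _. apply L1.
Qed.

Lemma L3 t : 0 <= t -> 2 * t <= exp t - exp (- t).
Proof.
  intros Ht.
  assert (H := mono_deriv (fun t => exp t - exp (-t) - 2 * t)
     (fun t => exp t + exp (-t) - 2) 0 t Ht).
  simpl in H. rewrite Ropp_0, exp_0 in H.
  cut (0 <= exp t - exp (-t) - 2 * t); [lra|].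
  replace 0 with (1 - 1 - 2 * 0) at 1 by ring. apply H.
  - intros y _. auto_derive; auto. ring.
  - intros y _. pose proof (exp_pos y).
    assert (exp y * exp (-y) = 1) by (rewrite <- exp_plus; replace (y + - y) with 0 by ring; apply exp_0).
    assert (0 <= (exp y - 1) * (exp y - 1) * exp (-y)) by (apply Rmult_le_pos; [apply Rle_0_sqr| left; apply exp_pos]).
    nra.
Qed.

Definition Hs (rho s : R) : R :=
  exp (rho * ln (1 + exp (- (1/(1+rho) * s)))) * (exp (rho/(1+rho) * s) - 1) / s.

Lemma expinv x : exp x * exp (- x) = 1.
Proof. rewrite <- exp_plus; replace (x + - x) with 0 by ring; apply exp_0. Qed.

Lemma exp_le_exp x y : x <= y -> exp x <= exp y.
Proof. intros [H|H]; [left; apply exp_increasing; exact H| subst; lra]. Qed.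

Lemma Qpos (a b s : R) : 0 < a -> a + b = 1 -> 0 < s ->
  let E := exp (- (a * s)) in let X := exp (b * s) in
  0 <= - b * E * s * (X - 1) + (1 + E) * (b * s * X - X + 1).
Proof.
  intros Ha Hab Hs E X.
  assert (HA := L1 (b * s)). fold X in HA.
  assert (HE : 0 < E) by apply exp_pos. assert (HX : 0 < X) by apply exp_pos.
  destruct (Rle_or_lt 0 b) as [Hb|Hb].
  - assert (HL2 := L2 (b * s)). fold X in HL2. assert (0 <= b * s) by nra.
    specialize (HL2 H).
    assert (E <= 1). { unfold E. rewrite <- exp_0. apply exp_le_exp. nra. }
    assert (0 <= (1 - E) * (b * s * X - X + 1)) by nra.
    nra.
  - assert (E <= X). { unfold E, X. apply exp_le_exp. nra. }
    assert (1 + b * s - X <= 0). { pose proof (exp_ineq1_le (b*s)). fold X in H0. lra. }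
    assert (HL3 := L3 (- (b * s))). assert (0 <= - (b*s)) by nra. specialize (HL3 H1).
    rewrite Ropp_involutive in HL3. fold X in HL3.
    assert (X * exp (- (b * s)) = 1) by apply expinv.
    assert (0 <= 2 * (b*s) * X + 1 - X * X) by nra.
    assert (0 <= (E - X) * (1 + b * s - X)) by nra.
    nra.
Qed.

Lemma Hs_mono rho s1 s2 : -1 < rho -> 0 < s1 <= s2 -> Hs rho s1 <= Hs rho s2.
Proof.
  intros Hr [H1 H2].
  set (a := 1/(1+rho)). set (b := rho/(1+rho)).
  assert (Ha : 0 < a) by (unfold a; apply Rdiv_lt_0_compat; lra).
  assert (Hab : a + b = 1) by (unfold a, b; field; lra).
  assert (Hra : rho * a = b) by (unfold a, b; field; lra).
  apply (mono_deriv (Hs rho) (fun s =>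
    (rho * (- (a * 1) * exp (- (a * s)) * / (1 + exp (- (a * s)))) *
     exp (rho * ln (1 + exp (- (a * s)))) * (exp (b * s) + - (1)) +
     exp (rho * ln (1 + exp (- (a * s)))) * (b * 1 * exp (b * s))) * / s +
    exp (rho * ln (1 + exp (- (a * s)))) * (exp (b * s) + - (1)) * (- (1) * / (s * s)))).
  - lra.
  - intros x Hx. unfold Hs. fold a b. auto_derive.
    + pose proof (exp_pos (- (a * x))). repeat split; lra.
    + reflexivity.
  - intros s Hs0. assert (Hs' : 0 < s) by lra.
    pose proof (Qpos a b s Ha Hab Hs'). simpl in H.
    set (E := exp (- (a * s))) in *. set (X := exp (b * s)) in *.
    set (P := exp (rho * ln (1 + E))).
    assert (0 < P) by apply exp_pos. assert (0 < E) by apply exp_pos.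
    replace (_ + _) with (P * (- b * E * s * (X - 1) + (1 + E) * (b * s * X - X + 1)) / (s * s * (1 + E))).
    + apply Rmult_le_pos; [apply Rmult_le_pos; lra|].
      left. apply Rinv_0_lt_compat. apply Rmult_lt_0_compat; nra.
    + rewrite <- Hra. field. lra.
Qed.

Lemma cont_of_deriv f x l : is_derive f x l -> continuity_pt f x.
Proof. intros H. apply is_derive_Reals in H. exact (derivable_continuous_pt f x (exist _ l H)). Qed.

Lemma cont_loc f g x d : 0 < d -> (forall y, Rabs (y - x) < d -> f y = g y) ->
  continuity_pt g x -> continuity_pt f x.
Proof.
  intros Hd Heq Hg eps Heps. destruct (Hg eps Heps) as [alp [Halp H]].
  exists (Rmin alp d). split; [apply Rmin_pos; lra|].
  intros y [Hy1 Hy2]. unfold R_dist in *.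
  assert (Ha : Rabs (y - x) < alp) by (eapply Rlt_le_trans; [exact Hy2| apply Rmin_l]).
  assert (Hb : Rabs (y - x) < d) by (eapply Rlt_le_trans; [exact Hy2| apply Rmin_r]).
  rewrite (Heq y Hb), (Heq x); [|rewrite Rminus_diag, Rabs_R0; lra].
  apply H. split; [exact Hy1| exact Ha].
Qed.

Lemma ln_nonpos x : x <= 0 -> ln x = 0.
Proof. intros H. unfold ln. destruct (Rlt_dec 0 x) as [r|r]; [exfalso; lra|reflexivity]. Qed.

Lemma ln_le_sub1 x : 0 < x -> ln x <= x - 1.
Proof. intros H. pose proof (exp_ineq1_le (ln x)). rewrite exp_ln in H0; lra. Qed.

Lemma xl_cont x : continuity_pt (fun y => y * ln y) x.
Proof.
  destruct (Rtotal_order x 0) as [Hx|[Hx|Hx]].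
  - apply (cont_loc _ (fun _ => 0) x (- x)); [lra| |apply continuity_pt_const; intros ? ?; reflexivity].
    intros y Hy. assert (y < 0). { apply Rabs_def2 in Hy. lra. }
    rewrite ln_nonpos; lra.
  - subst x. intros eps Heps. exists (Rmin 1 ((eps/2)*(eps/2))).
    split; [apply Rmin_pos; nra|].
    intros y [_ Hy]. simpl in *. unfold R_dist in *. rewrite Rminus_0_r in Hy.
    rewrite ln_nonpos with (x := 0) by lra. rewrite Rmult_0_l, Rminus_0_r.
    assert (Hy1 : Rabs y < 1) by (eapply Rlt_le_trans; [exact Hy| apply Rmin_l]).
    assert (Hy2 : Rabs y < eps/2*(eps/2)) by (eapply Rlt_le_trans; [exact Hy| apply Rmin_r]).
    destruct (Rle_or_lt y 0) as [Hn|Hp].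
    + rewrite ln_nonpos by lra. rewrite Rmult_0_r, Rabs_R0. lra.
    + rewrite Rabs_pos_eq in Hy1, Hy2 by lra.
      set (u := sqrt y). assert (Hu : 0 < u) by (apply sqrt_lt_R0; lra).
      assert (Huu : u * u = y) by (apply sqrt_sqrt; lra).
      assert (Hlnu : ln y = 2 * ln u) by (rewrite <- Huu, ln_mult by lra; ring).
      assert (Hl : ln (/ u) <= / u - 1) by (apply ln_le_sub1; apply Rinv_0_lt_compat; lra).
      rewrite ln_Rinv in Hl by lra.
      assert (Hlt : ln y < 0) by (rewrite <- ln_1; apply ln_increasing; lra).
      assert (Hue : u < eps / 2) by nra.
      rewrite Rabs_left by nra.
      assert (u * / u = 1) by (field; lra).
      rewrite Hlnu. rewrite <- Huu. nra.
  - apply cont_of_deriv with (l := ln x + 1). auto_derive; [lra| field; lra].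
Qed.

Definition pw (a x : R) : R := rpow (Rabs x) a.

Lemma pw_cont a x : 0 < a -> continuity_pt (pw a) x.
Proof.
  intros Ha.
  destruct (Rtotal_order x 0) as [Hx|[Hx|Hx]].
  - apply (cont_loc _ (fun y => exp (a * ln (- y))) x (- x)); [lra| |].
    + intros y Hy. assert (y < 0). { apply Rabs_def2 in Hy. lra. }
      unfold pw, rpow. rewrite Rabs_left by lra.
      destruct (Req_EM_T (- y) 0); [lra| reflexivity].
    + apply cont_of_deriv with (l := exp (a * ln (- x)) * (a * (- 1 / - x))). auto_derive; [lra| field; lra].
  - subst x. intros eps Heps. exists (Rpower eps (1 / a)).
    split; [apply exp_pos|].
    intros y [_ Hy]. simpl in *. unfold R_dist in *. rewrite Rminus_0_r in Hy.
    unfold pw, rpow. rewrite Rabs_R0. destruct (Req_EM_T 0 0); [|lra].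
    destruct (Req_EM_T (Rabs y) 0) as [E|E].
    + rewrite Rminus_0_r, Rabs_R0. lra.
    + rewrite Rminus_0_r. rewrite Rabs_pos_eq by (left; apply exp_pos).
      replace eps with (Rpower (Rpower eps (1 / a)) a).
      * apply Rlt_Rpower_l; [lra|]. split; [|exact Hy]. pose proof (Rabs_pos y). lra.
      * rewrite Rpower_mult. replace (1 / a * a) with 1 by (field; lra). apply Rpower_1; lra.
  - apply (cont_loc _ (fun y => exp (a * ln y)) x x); [lra| |].
    + intros y Hy. assert (0 < y). { apply Rabs_def2 in Hy. lra. }
      unfold pw, rpow. rewrite Rabs_pos_eq by lra.
      destruct (Req_EM_T y 0); [lra| reflexivity].
    + apply cont_of_deriv with (l := exp (a * ln x) * (a * (1 / x))). auto_derive; [lra| field; lra].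
Qed.

Lemma cont_Rpower f x p : continuity_pt f x -> 0 < f x ->
  continuity_pt (fun y => Rpower (f y) p) x.
Proof.
  intros Hf Hp. unfold Rpower.
  change (continuity_pt (comp (fun z => exp (p * ln z)) f) x).
  apply continuity_pt_comp; [exact Hf|].
  apply cont_of_deriv with (l := exp (p * ln (f x)) * (p * (1 / f x))).
  auto_derive; [lra| field; lra].
Qed.

Lemma ln2_pos : 0 < ln 2.
Proof. pose proof ln_lt_2. lra. Qed.

Lemma xlog2x_eq x : xlog2x x = x * ln x / ln 2.
Proof.
  pose proof ln2_pos. unfold xlog2x, log2. destruct (Req_EM_T x 0) as [->|_]; field; lra.
Qed.

Lemma h_eq x : h x = - (x * ln x + (1 - x) * ln (1 - x)) / ln 2.
Proof. pose proof ln2_pos. unfold h. rewrite !xlog2x_eq. field. lra. Qed.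

Lemma h_cont : continuity h.
Proof.
  intros x. apply continuity_pt_ext with
    (f := fun x => (- ((x * ln x) + (1 - x) * ln (1 - x))) * / ln 2).
  { intros y. rewrite h_eq. unfold Rdiv. reflexivity. }
  apply continuity_pt_mult; [|apply continuity_pt_const; intros ? ?; reflexivity].
  apply continuity_pt_opp. apply continuity_pt_plus; [apply xl_cont|].
  change (continuity_pt (comp (fun y => y * ln y) (fun x => 1 - x)) x).
  apply continuity_pt_comp; [|apply xl_cont].
  apply continuity_pt_minus; [apply continuity_pt_const; intros ? ?; reflexivity| apply continuity_pt_id].
Qed.

Lemma h0 : h 0 = 0.
Proof. rewrite h_eq. rewrite Rminus_0_r, ln_1. field. pose proof ln2_pos; lra. Qed.

Lemma h12 : h (1/2) = 1.
Proof.
  pose proof ln2_pos. rewrite h_eq. replace (1 - 1/2) with (/ 2) by field.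
  replace (1/2) with (/2) by field. rewrite ln_Rinv by lra. field. lra.
Qed.

Lemma hinv_spec y : 0 <= y <= 1 -> 0 <= hinv y <= 1/2 /\ h (hinv y) = y.
Proof.
  intros Hy. unfold hinv. apply (epsilon_spec (inhabits 0) (fun p => 0 <= p <= 1/2 /\ h p = y)).
  destruct (IVT_cor (fun p => h p - y) 0 (1/2)) as [z [Hz1 Hz2]].
  - intros x. apply continuity_pt_minus; [apply h_cont| apply continuity_pt_const; intros ? ?; reflexivity].
  - lra.
  - rewrite h0, h12. nra.
  - exists z. split; [exact Hz1| lra].
Qed.

Definition Ce (e : R) : R := 1 - h e.

Lemma Ce_cont e : e < 1 -> continuity_pt Ce e.
Proof.
  intros _. unfold Ce. apply continuity_pt_minus; [apply continuity_pt_const; intros ? ?; reflexivity| apply h_cont].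
Qed.

Lemma Ce_deriv e : 0 < e < 1 -> is_derive Ce e ((ln e - ln (1 - e)) / ln 2).
Proof.
  intros He. pose proof ln2_pos.
  apply is_derive_ext with (f := fun e => 1 + (e * ln e + (1 - e) * ln (1 - e)) / ln 2).
  { intros t. unfold Ce. rewrite h_eq. change (@eq R (1 + (t * ln t + (1 - t) * ln (1 - t)) / ln 2) (1 - - (t * ln t + (1 - t) * ln (1 - t)) / ln 2)). field. lra. }
  auto_derive.
  - repeat split; lra.
  - match goal with |- ?a = ?b => change (@eq R a b) end. replace (1 + - e) with (1 - e) by ring. change RinvImpl.Rinv with Rinv. field; repeat split; lra.
Qed.

Lemma pw_nonneg a x : 0 <= pw a x.
Proof. unfold pw, rpow. destruct (Req_EM_T (Rabs x) 0); [lra| left; apply exp_pos]. Qed.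

Lemma pw_pos a x : x <> 0 -> 0 < pw a x.
Proof.
  intros H. unfold pw, rpow. destruct (Req_EM_T (Rabs x) 0) as [E|_]; [|apply exp_pos].
  exfalso. apply H. apply Rabs_eq_0 in E. exact E.
Qed.

Definition Fm (rho e : R) : R :=
  Rpower 2 (- rho) * Rpower (pw (1/(1+rho)) e + pw (1/(1+rho)) (1 - e)) (1 + rho).

Lemma Fm_cont rho e : -1 < rho -> e < 1 -> continuity_pt (Fm rho) e.
Proof.
  intros Hr He. assert (Ha : 0 < 1/(1+rho)) by (apply Rdiv_lt_0_compat; lra).
  unfold Fm. apply continuity_pt_mult; [apply continuity_pt_const; intros ? ?; reflexivity|].
  apply cont_Rpower.
  - apply continuity_pt_plus; [apply pw_cont; exact Ha|].
    change (continuity_pt (comp (pw (1/(1+rho))) (fun x => 1 - x)) e).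
    apply continuity_pt_comp; [|apply pw_cont; exact Ha].
    apply continuity_pt_minus; [apply continuity_pt_const; intros ? ?; reflexivity| apply continuity_pt_id].
  - pose proof (pw_nonneg (1/(1+rho)) e). pose proof (pw_pos (1/(1+rho)) (1 - e)). lra.
Qed.

Lemma loc (x d : R) (P : R -> Prop) : 0 < d -> (forall y, Rabs (y - x) < d -> P y) -> locally x P.
Proof. intros Hd H. exists (mkposreal d Hd). intros y Hy. apply H. exact Hy. Qed.

Lemma exp_div x y : exp x / exp y = exp (x - y).
Proof. unfold Rminus. rewrite exp_plus, exp_Ropp. reflexivity. Qed.

Lemma Fm_deriv rho e : -1 < rho -> 0 < e < 1 ->
  is_derive (Fm rho) e
    (Rpower 2 (- rho) * exp (rho * ln (1 + exp (- (1/(1+rho) * (ln (1 - e) - ln e))))) *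
     (exp (rho/(1+rho) * (ln (1 - e) - ln e)) - 1)).
Proof.
  intros Hr He.
  set (a := 1/(1+rho)). set (b := rho/(1+rho)). set (K := Rpower 2 (- rho)).
  assert (Hab : a + b = 1) by (unfold a, b; field; lra).
  assert (Hra : rho * a = b) by (unfold a, b; field; lra).
  assert (Hra1 : (1 + rho) * a = 1) by (unfold a; field; lra).
  apply is_derive_ext_loc with
    (f := fun y => K * exp ((1 + rho) * ln (exp (a * ln y) + exp (a * ln (1 - y))))).
  { apply (loc e (Rmin e (1 - e))); [apply Rmin_pos; lra|].
    intros y Hy. assert (Hy1 : Rabs (y - e) < e) by (eapply Rlt_le_trans; [exact Hy| apply Rmin_l]).
    assert (Hy2 : Rabs (y - e) < 1 - e) by (eapply Rlt_le_trans; [exact Hy| apply Rmin_r]).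
    apply Rabs_def2 in Hy1. apply Rabs_def2 in Hy2.
    unfold Fm, pw, rpow. fold a. rewrite (Rabs_pos_eq y) by lra. rewrite (Rabs_pos_eq (1 - y)) by lra.
    destruct (Req_EM_T y 0); [lra|]. destruct (Req_EM_T (1 - y) 0); [lra|].
    reflexivity. }
  set (L1 := ln e). set (L2 := ln (1 - e)).
  set (E1 := exp (a * L1)). set (E2 := exp (a * L2)).
  assert (HE1 : 0 < E1) by apply exp_pos. assert (HE2 : 0 < E2) by apply exp_pos.
  assert (HD : is_derive (fun y => K * exp ((1 + rho) * ln (exp (a * ln y) + exp (a * ln (1 - y))))) e
     (K * ((1 + rho) * (a * (E1 / e) - a * (E2 / (1 - e))) / (E1 + E2) * exp ((1 + rho) * ln (E1 + E2))))).
  { auto_derive.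
    - replace (1 + - e) with (1 - e) by ring. fold L1 L2 E1 E2. repeat split; lra.
    - replace (1 + - e) with (1 - e) by ring. fold L1 L2 E1 E2. match goal with |- ?x = ?y => change (@eq R x y) end.
      change RinvImpl.Rinv with Rinv. field. lra. }
  match goal with |- is_derive _ _ ?l => replace l with
     (K * ((1 + rho) * (a * (E1 / e) - a * (E2 / (1 - e))) / (E1 + E2) * exp ((1 + rho) * ln (E1 + E2)))) end.
  { exact HD. }
  fold a b L1 L2.
  set (s := L2 - L1).
  set (Z := exp (- (a * s))). set (W := exp (b * L2)). set (V := exp (b * s)).
  set (P := exp (rho * ln (1 + Z))).
  assert (HZ : 0 < Z) by apply exp_pos. assert (HW : 0 < W) by apply exp_pos.
  assert (hE1 : E1 = E2 * Z).
  { unfold E1, E2, Z. rewrite <- exp_plus. f_equal. unfold s. ring. }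
  assert (he : e = exp L1) by (unfold L1; rewrite exp_ln; lra).
  assert (he' : 1 - e = exp L2) by (unfold L2; rewrite exp_ln; lra).
  assert (hq1 : E1 / e = V / W).
  { rewrite he. unfold E1, V, W. rewrite !exp_div. f_equal. unfold s. replace a with (1 - b) by lra. ring. }
  assert (hq2 : E2 / (1 - e) = / W).
  { rewrite he'. unfold E2, W. rewrite exp_div, <- exp_Ropp. f_equal. replace a with (1 - b) by lra. ring. }
  assert (hS : exp ((1 + rho) * ln (E1 + E2)) = (E1 + E2) * W * P).
  { assert (hl : ln (E1 + E2) = a * L2 + ln (1 + Z)).
    { replace (E1 + E2) with (E2 * (1 + Z)) by (rewrite hE1; ring).
      rewrite ln_mult by lra. unfold E2. rewrite ln_exp. reflexivity. }
    replace ((1 + rho) * ln (E1 + E2)) with (ln (E1 + E2) + (b * L2 + rho * ln (1 + Z))).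
    - rewrite exp_plus, exp_ln by lra. rewrite exp_plus. unfold W, P. ring.
    - rewrite hl. rewrite <- Hra. ring. }
  match goal with |- ?x = ?y => change (@eq R x y) end.
  rewrite hq1, hq2, hS. change RinvImpl.Rinv with Rinv.
  transitivity (K * ((1 + rho) * a) * P * (V - 1)); [field; split; lra| rewrite Hra1; ring].
Qed.

Lemma cmvt f g f' g' a b : a < b ->
  (forall c, a < c < b -> is_derive f c (f' c)) ->
  (forall c, a < c < b -> is_derive g c (g' c)) ->
  (forall c, a <= c <= b -> continuity_pt f c) ->
  (forall c, a <= c <= b -> continuity_pt g c) ->
  exists c, a < c < b /\ (g b - g a) * f' c = (f b - f a) * g' c.
Proof.
  intros Hab Hf Hg Cf Cg.
  pose (pr1 := fun c (P : a < c < b) => exist (fun l => derivable_pt_lim f c l) (f' c) (proj1 (is_derive_Reals _ _ _) (Hf c P))).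
  pose (pr2 := fun c (P : a < c < b) => exist (fun l => derivable_pt_lim g c l) (g' c) (proj1 (is_derive_Reals _ _ _) (Hg c P))).
  destruct (MVT f g a b pr1 pr2 Hab Cf Cg) as [c [P Hc]].
  exists c. split; [exact P|]. simpl in Hc. exact Hc.
Qed.

Definition Gs (rho e : R) : R := - ln 2 * Rpower 2 (- rho) * Hs rho (ln (1 - e) - ln e).

Lemma s_pos c : 0 < c < 1/2 -> 0 < ln (1 - c) - ln c.
Proof. intros H. pose proof (ln_increasing c (1 - c)). lra. Qed.

Lemma key rho e1 e2 : -1 < rho -> 0 <= e1 < e2 -> e2 <= 1/2 ->
  exists c, e1 < c < e2 /\ Fm rho e2 - Fm rho e1 = Gs rho c * (Ce e2 - Ce e1).
Proof.
  intros Hr H1 H2.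
  destruct (cmvt (Fm rho) Ce
     (fun e => Rpower 2 (- rho) * exp (rho * ln (1 + exp (- (1/(1+rho) * (ln (1 - e) - ln e))))) *
       (exp (rho/(1+rho) * (ln (1 - e) - ln e)) - 1))
     (fun e => (ln e - ln (1 - e)) / ln 2) e1 e2) as [c [Hc Heq]].
  - lra.
  - intros c Hc. apply Fm_deriv; lra.
  - intros c Hc. apply Ce_deriv; lra.
  - intros c Hc. apply Fm_cont; lra.
  - intros c Hc. apply Ce_cont; lra.
  - exists c. split; [exact Hc|].
    assert (Hs0 := s_pos c ltac:(lra)).
    set (s := ln (1 - c) - ln c) in *.
    pose proof ln2_pos.
    assert (HC : (ln c - ln (1 - c)) / ln 2 = - s / ln 2) by (unfold s; field; lra).
    rewrite HC in Heq. fold s in Heq.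
    assert (HG : Rpower 2 (- rho) * exp (rho * ln (1 + exp (- (1 / (1 + rho) * s)))) *
      (exp (rho / (1 + rho) * s) - 1) = Gs rho c * (- s / ln 2)).
    { unfold Gs, Hs. fold s. field. lra. }
    rewrite HG in Heq.
    apply (Rmult_eq_reg_r (- s / ln 2)).
    + rewrite <- Heq. ring.
    + apply Rmult_integral_contrapositive. split; [lra| apply Rinv_neq_0_compat; lra].
Qed.

Lemma Ce_decr e1 e2 : 0 <= e1 < e2 -> e2 <= 1/2 -> Ce e2 < Ce e1.
Proof.
  intros H1 H2.
  destruct (cmvt Ce (fun x => x) (fun e => (ln e - ln (1 - e)) / ln 2) (fun _ => 1) e1 e2) as [c [Hc Heq]].
  - lra.
  - intros c Hc. apply Ce_deriv; lra.
  - intros c Hc. auto_derive; auto.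
  - intros c Hc. apply Ce_cont; lra.
  - intros c Hc. apply continuity_pt_id.
  - assert (Hs0 := s_pos c ltac:(lra)). pose proof ln2_pos.
    assert ((ln c - ln (1 - c)) / ln 2 < 0).
    { unfold Rdiv. apply Rmult_neg_pos; [lra| apply Rinv_0_lt_compat; lra]. }
    nra.
Qed.

Lemma Gs_mono rho c1 c2 : -1 < rho -> 0 < c1 <= c2 -> c2 < 1/2 -> Gs rho c1 <= Gs rho c2.
Proof.
  intros Hr H1 H2. unfold Gs.
  assert (Hs1 := s_pos c1 ltac:(lra)). assert (Hs2 := s_pos c2 ltac:(lra)).
  assert (ln c1 <= ln c2) by (apply ln_le; lra).
  assert (ln (1 - c2) <= ln (1 - c1)) by (apply ln_le; lra).
  assert (Hm := Hs_mono rho (ln (1 - c2) - ln c2) (ln (1 - c1) - ln c1) Hr ltac:(lra)).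
  pose proof ln2_pos. assert (0 < Rpower 2 (- rho)) by apply exp_pos.
  assert (0 < ln 2 * Rpower 2 (- rho)) by (apply Rmult_lt_0_compat; lra).
  nra.
Qed.

Lemma Gs_sign rho c : -1 < rho -> 0 < c < 1/2 ->
  (rho <= 0 -> 0 <= Gs rho c) /\ (0 <= rho -> Gs rho c <= 0).
Proof.
  intros Hr Hc. assert (Hs0 := s_pos c Hc).
  unfold Gs, Hs. set (s := ln (1 - c) - ln c) in *.
  set (P := exp (rho * ln (1 + exp (- (1 / (1 + rho) * s))))).
  assert (HP : 0 < P) by apply exp_pos.
  pose proof ln2_pos. assert (0 < Rpower 2 (- rho)) by apply exp_pos.
  assert (HK : 0 < ln 2 * Rpower 2 (- rho)) by (apply Rmult_lt_0_compat; lra).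
  assert (Hi : 0 < / s) by (apply Rinv_0_lt_compat; lra).
  replace (- ln 2 * Rpower 2 (- rho) * (P * (exp (rho / (1 + rho) * s) - 1) / s))
    with (- (ln 2 * Rpower 2 (- rho)) * P * / s * (exp (rho / (1 + rho) * s) - 1)) by (unfold Rdiv; ring).
  assert (0 < ln 2 * Rpower 2 (- rho) * P * / s) by (repeat apply Rmult_lt_0_compat; lra).
  split; intros Hrho.
  - assert (exp (rho / (1 + rho) * s) <= exp 0).
    { apply exp_le_exp. assert (rho / (1 + rho) <= 0).
      { unfold Rdiv. apply Rmult_le_0_r; [lra| left; apply Rinv_0_lt_compat; lra]. } nra. }
    rewrite exp_0 in *. nra.
  - assert (exp 0 <= exp (rho / (1 + rho) * s)).
    { apply exp_le_exp. assert (0 <= rho / (1 + rho)).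
      { unfold Rdiv. apply Rmult_le_pos; [lra| left; apply Rinv_0_lt_compat; lra]. } nra. }
    rewrite exp_0 in *. nra.
Qed.

Lemma rpow_pos_eq x p : 0 < x -> rpow x p = Rpower x p.
Proof. intros H. unfold rpow. destruct (Req_EM_T x 0); [lra| reflexivity]. Qed.

Definition ee (C : R) : R := hinv (1 - C).

Lemma ee_spec C : 0 <= C <= 1 -> 0 <= ee C <= 1/2 /\ Ce (ee C) = C.
Proof.
  intros H. destruct (hinv_spec (1 - C)) as [H1 H2]; [lra|].
  split; [exact H1|]. unfold Ce, ee. rewrite H2. ring.
Qed.

Lemma Fbsc_eq rho C : -1 < rho -> 0 <= C <= 1 -> Fbsc rho C = Fm rho (ee C).
Proof.
  intros Hr HC. destruct (ee_spec C HC) as [He _].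
  unfold Fbsc, Fm, pw. fold (ee C).
  rewrite (Rabs_pos_eq (ee C)) by lra. rewrite (Rabs_pos_eq (1 - ee C)) by lra.
  rewrite (rpow_pos_eq 2) by lra. f_equal.
  apply rpow_pos_eq.
  assert (0 <= rpow (ee C) (1 / (1 + rho))) by (unfold rpow; destruct Req_EM_T; [lra| left; apply exp_pos]).
  rewrite (rpow_pos_eq (1 - ee C)) by lra. pose proof (exp_pos (1 / (1 + rho) * ln (1 - ee C))).
  unfold Rpower. lra.
Qed.

Lemma ee_order C1 C2 : 0 <= C1 -> C1 < C2 -> C2 <= 1 -> ee C2 < ee C1.
Proof.
  intros H1 H2 H3.
  destruct (ee_spec C1) as [A1 B1]; [lra|]. destruct (ee_spec C2) as [A2 B2]; [lra|].
  destruct (Rlt_or_le (ee C2) (ee C1)) as [H|H]; [exact H|].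
  exfalso. destruct H as [H|H].
  - pose proof (Ce_decr (ee C1) (ee C2) ltac:(lra) ltac:(lra)). lra.
  - rewrite H in B1. lra.
Qed.

Lemma three_point rho x z y : -1 < rho -> 0 <= x -> x < z -> z < y -> y <= 1 ->
  (Fbsc rho y - Fbsc rho z) * (z - x) <= (Fbsc rho z - Fbsc rho x) * (y - z).
Proof.
  intros Hr H1 H2 H3 H4.
  rewrite !Fbsc_eq by lra.
  pose proof (ee_order x z H1 H2 ltac:(lra)). pose proof (ee_order z y ltac:(lra) H3 H4).
  destruct (ee_spec x) as [Ax Bx]; [lra|]. destruct (ee_spec z) as [Az Bz]; [lra|].
  destruct (ee_spec y) as [Ay By]; [lra|].
  destruct (key rho (ee z) (ee x) Hr ltac:(lra) ltac:(lra)) as [c1 [Hc1 E1]].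
  destruct (key rho (ee y) (ee z) Hr ltac:(lra) ltac:(lra)) as [c2 [Hc2 E2]].
  rewrite Bx, Bz in E1. rewrite Bz, By in E2.
  assert (Gs rho c2 <= Gs rho c1) by (apply Gs_mono; lra).
  assert (0 < (z - x) * (y - z)) by nra.
  replace (Fm rho (ee z) - Fm rho (ee x)) with (- (Fm rho (ee x) - Fm rho (ee z))) by ring.
  replace (Fm rho (ee y) - Fm rho (ee z)) with (- (Fm rho (ee z) - Fm rho (ee y))) by ring.
  rewrite E1, E2. nra.
Qed.

Lemma concave_lt rho x y t : -1 < rho -> 0 <= x -> x < y -> y <= 1 -> 0 < t < 1 ->
  t * Fbsc rho x + (1 - t) * Fbsc rho y <= Fbsc rho (t * x + (1 - t) * y).
Proof.
  intros Hr H1 H2 H3 Ht. set (z := t * x + (1 - t) * y).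
  assert (x < z) by (unfold z; nra). assert (z < y) by (unfold z; nra).
  pose proof (three_point rho x z y Hr H1 H H0 H3).
  replace (z - x) with ((1 - t) * (y - x)) in H4 by (unfold z; ring).
  replace (y - z) with (t * (y - x)) in H4 by (unfold z; ring).
  set (Fx := Fbsc rho x) in *. set (Fy := Fbsc rho y) in *. set (Fz := Fbsc rho z) in *.
  assert (0 <= (y - x) * (Fz - t * Fx - (1 - t) * Fy)) by nra.
  destruct (Rle_or_lt 0 (Fz - t * Fx - (1 - t) * Fy)); [lra|].
  assert ((y - x) * (Fz - t * Fx - (1 - t) * Fy) < 0) by (apply Rmult_pos_neg; lra). lra.
Qed.

Theorem lemma1 (rho : R) (hrho : -1 < rho) :
  concave_on_01 (Fbsc rho) /\
  (rho <= 0 -> forall C1 C2, 0 <= C1 -> C1 <= C2 -> C2 <= 1 ->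
     Fbsc rho C1 <= Fbsc rho C2) /\
  (0 <= rho -> forall C1 C2, 0 <= C1 -> C1 <= C2 -> C2 <= 1 ->
     Fbsc rho C2 <= Fbsc rho C1).
Proof.
  assert (Hmono : forall C1 C2, 0 <= C1 -> C1 < C2 -> C2 <= 1 ->
     exists c, 0 < c < 1/2 /\ Fbsc rho C1 - Fbsc rho C2 = Gs rho c * (C1 - C2)).
  { intros C1 C2 H1 H2 H3. rewrite !Fbsc_eq by lra.
    pose proof (ee_order C1 C2 H1 H2 H3).
    destruct (ee_spec C1) as [A1 B1]; [lra|]. destruct (ee_spec C2) as [A2 B2]; [lra|].
    destruct (key rho (ee C2) (ee C1) hrho ltac:(lra) ltac:(lra)) as [c [Hc E]].
    exists c. split; [lra|]. rewrite E, B1, B2. reflexivity. }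
  split; [|split].
  - intros x y t Hx Hy Ht.
    destruct (Req_dec t 0) as [->|Ht0].
    { replace (0 * x + (1 - 0) * y) with y by ring. lra. }
    destruct (Req_dec t 1) as [->|Ht1].
    { replace (1 * x + (1 - 1) * y) with x by ring. lra. }
    destruct (Rtotal_order x y) as [Hxy|[Hxy|Hxy]].
    + apply concave_lt; lra.
    + subst y. replace (t * x + (1 - t) * x) with x by ring. lra.
    + pose proof (concave_lt rho y x (1 - t) hrho ltac:(lra) Hxy ltac:(lra) ltac:(lra)).
      replace (1 - (1 - t)) with t in H by ring.
      replace (t * x + (1 - t) * y) with ((1 - t) * y + t * x) by ring. lra.
  - intros Hr C1 C2 H1 H2 H3. destruct H2 as [H2|H2]; [|subst; lra].
    destruct (Hmono C1 C2 H1 H2 H3) as [c [Hc E]].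
    destruct (Gs_sign rho c hrho Hc) as [S _]. specialize (S Hr). nra.
  - intros Hr C1 C2 H1 H2 H3. destruct H2 as [H2|H2]; [|subst; lra].
    destruct (Hmono C1 C2 H1 H2 H3) as [c [Hc E]].
    destruct (Gs_sign rho c hrho Hc) as [_ S]. specialize (S Hr). nra.
Qed.
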